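(* Let $C>0$ and let $\varphi_{0,i}(u,v,z)=r^{p_i}z^{q_i}$, $i=1,2$, where $r=\sqrt{u^2+v^2}$. Then for all $r_*>0$ sufficiently large, on $\mathcal{R}_0=\{(u,v,z): r\ge r_*,\ Cu\ge|v|,\ 0<z\le1\}$ one has $\mathcal{L}\varphi_{0,i}(u,v,z)\le-\gamma p_ir^{p_i}z^{q_i}-\frac{\beta_i}{2\sqrt{1+C^2}}r^{p_i+1}z^{q_i-2/3}$, $i=1,2$, and for all $(u,v,1)\in\mathcal{R}_0$, $\mathcal{Q}(\varphi_{0,1}+\varphi_{0,2})(u,v,1)\le-\left(\tfrac{q_2}{2}-\tfrac{p_2}{6}\right)r^{p_2}.$
   Context: Fix $\gamma>0$, $h\in(0,1)$, $\kappa_1,\kappa_2>0$ and $\alpha_h=\frac13+\frac23h$. Constants $p_i,q_i,\alpha_i,\beta_i$ ($i=1,2$) satisfy $p_1>0$, $p_2>0$, $q_1=0$, $q_2>0$, $0<\alpha_hp_i-(1-h)q_i=\beta_i<\alpha_i<1$, $q_2>\frac13p_2+\frac12\alpha_2$, $p_2>p_1$, $p_2+\frac32\alpha_2>p_1+\frac32\alpha_1$. On $\mathbb{R}\times\mathbb{R}\times(0,1]$ define the differential operators $\mathcal{L}=-\gamma u\partial_u-\gamma v\partial_v-\frac{\alpha_hu^2-v^2}{z^{2/3}}\partial_u-(\alpha_h+1)\frac{uv}{z^{2/3}}\partial_v+(1-h)uz^{1/3}\partial_z+\frac{\kappa_1}{z^{2/3}}\partial_u^2+\frac{\kappa_2}{z^{2/3}}\partial_v^2$,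 $\mathcal{Q}=\frac{u}{3z}\partial_u+\frac{v}{3z}\partial_v-\partial_z$ (these are the interior generator and boundary operator of the reflected system after the change of variables $u=xz^{-1/3}$, $v=yz^{-1/3}$). *)

(* Defs.v *)
From Stdlib Require Import Reals Lra.
From Coquelicot Require Import Coquelicot.
Open Scope R_scope.

Definition fun3 := R -> R -> R -> R.

Definition d_u (f : fun3) : fun3 := fun u v z => Derive (fun t => f t v z) u.
Definition d_v (f : fun3) : fun3 := fun u v z => Derive (fun t => f u t z) v.
Definition d_z (f : fun3) : fun3 := fun u v z => Derive (fun t => f u v t) z.

Definition alpha_h (h : R) : R := 1/3 + 2/3 * h.

(* Interior generator L (after the change of variables u = x z^{-1/3}, v = y z^{-1/3}). *)
Definition opL (gamma h kappa1 kappa2 : R) (f : fun3) : fun3 := fun u v z =>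
  - gamma * u * d_u f u v z
  - gamma * v * d_v f u v z
  - (alpha_h h * u ^ 2 - v ^ 2) / Rpower z (2/3) * d_u f u v z
  - (alpha_h h + 1) * (u * v) / Rpower z (2/3) * d_v f u v z
  + (1 - h) * u * Rpower z (1/3) * d_z f u v z
  + kappa1 / Rpower z (2/3) * d_u (d_u f) u v z
  + kappa2 / Rpower z (2/3) * d_v (d_v f) u v z.

Definition opQ (f : fun3) : fun3 := fun u v z =>
  u / (3 * z) * d_u f u v z + v / (3 * z) * d_v f u v z - d_z f u v z.

Definition rad (u v : R) : R := sqrt (u ^ 2 + v ^ 2).

(* phi_{0,i}(u,v,z) = r^{p} z^{q} (real powers; r > 0 and z > 0 on the region). *)
Definition phi0 (p q : R) : fun3 := fun u v z => Rpower (rad u v) p * Rpower z q.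

Definition fsum (f g : fun3) : fun3 := fun u v z => f u v z + g u v z.

(* Main.v *)
Require Import Defs.
From Stdlib Require Import Reals.
From Coquelicot Require Import Coquelicot.
From Stdlib Require Import Lra Psatz FunctionalExtensionality.
Open Scope R_scope.

Lemma ln_0 : ln 0 = 0.
Proof. unfold ln. destruct (Rlt_dec 0 0) as [h|h]. exfalso; apply (Rlt_irrefl 0 h). reflexivity. Qed.

Lemma ln_sqrt' x : 0 <= x -> ln (sqrt x) = ln x / 2.
Proof.
  intros Hx; destruct (Rle_lt_or_eq_dec 0 x Hx) as [H|H].
  - assert (Hs := sqrt_lt_R0 x H).
    rewrite <- (sqrt_sqrt x Hx) at 2. rewrite ln_mult; lra.
  - subst. rewrite sqrt_0, ln_0. lra.
Qed.

Lemma phi0_eq p q : phi0 p q = fun u v z => exp (p/2 * ln (u^2+v^2)) * Rpower z q.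
Proof.
  apply functional_extensionality; intro u.
  apply functional_extensionality; intro v.
  apply functional_extensionality; intro z.
  unfold phi0, rad. f_equal. unfold Rpower. f_equal.
  rewrite ln_sqrt'. field. nra.
Qed.

Ltac fixln := rewrite ?Rmult_1_r; repeat match goal with |- context [ln (?a * ?a + ?b * ?b)] => replace (a*a+b*b) with (a^2+b^2) by ring end.

Lemma du_phi p q u v z : 0 < u^2+v^2 ->
  d_u (phi0 p q) u v z = p * u * exp (p/2 * ln (u^2+v^2)) * Rpower z q / (u^2+v^2).
Proof.
  intros HS. unfold d_u. rewrite phi0_eq. apply is_derive_unique.
  auto_derive. lra. fixln. field. lra.
Qed.

Lemma dv_phi p q u v z : 0 < u^2+v^2 ->
  d_v (phi0 p q) u v z = p * v * exp (p/2 * ln (u^2+v^2)) * Rpower z q / (u^2+v^2).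
Proof.
  intros HS. unfold d_v. rewrite phi0_eq. apply is_derive_unique.
  auto_derive. lra. fixln. field. lra.
Qed.

Lemma dz_phi p q u v z : 0 < z ->
  d_z (phi0 p q) u v z = exp (p/2 * ln (u^2+v^2)) * (q / z * Rpower z q).
Proof.
  intros Hz. unfold d_z. rewrite phi0_eq. apply is_derive_unique.
  unfold Rpower. auto_derive. lra. fixln. field. lra.
Qed.

Lemma loc_pos u v : 0 < u -> locally u (fun t => 0 < t^2+v^2).
Proof.
  intros Hu. exists (mkposreal u Hu). intros t Ht.
  unfold ball in Ht; simpl in Ht; unfold AbsRing_ball, abs, minus, plus, opp in Ht; simpl in Ht.
  apply Rabs_def2 in Ht. nra.
Qed.

Lemma duu_phi p q u v z : 0 < u ->
  d_u (d_u (phi0 p q)) u v z = p * Rpower z q * exp (p/2 * ln (u^2+v^2))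
     * (1/(u^2+v^2) + (p-2)*u^2/(u^2+v^2)^2).
Proof.
  intros Hu. assert (HS : 0 < u^2+v^2) by nra.
  unfold d_u at 1.
  rewrite (Derive_ext_loc _ (fun t => p * t * exp (p/2 * ln (t^2+v^2)) * Rpower z q / (t^2+v^2))).
  - apply is_derive_unique. auto_derive. lra. fixln. field. lra.
  - generalize (loc_pos u v Hu). apply filter_imp. intros t Ht. apply du_phi; auto.
Qed.

Lemma dvv_phi p q u v z : 0 < u ->
  d_v (d_v (phi0 p q)) u v z = p * Rpower z q * exp (p/2 * ln (u^2+v^2))
     * (1/(u^2+v^2) + (p-2)*v^2/(u^2+v^2)^2).
Proof.
  intros Hu. assert (HS : 0 < u^2+v^2) by nra.
  unfold d_v at 1.
  rewrite (Derive_ext _ (fun t => p * t * exp (p/2 * ln (u^2+t^2)) * Rpower z q / (u^2+t^2))).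
  - apply is_derive_unique. auto_derive. lra. fixln. field. lra.
  - intros t. apply dv_phi. nra.
Qed.

Lemma exp_mono x y : x <= y -> exp x <= exp y.
Proof. intros H; destruct (Rle_lt_or_eq_dec x y H) as [h|h]. left; apply exp_increasing; auto. subst; lra. Qed.

Lemma Rpower_1_l q : Rpower 1 q = 1.
Proof. unfold Rpower. rewrite ln_1, Rmult_0_r, exp_0. reflexivity. Qed.

Lemma rad_pos u v : 0 < u -> 0 < rad u v.
Proof. intros; unfold rad; apply sqrt_lt_R0; nra. Qed.

Lemma Rpower_rad p u v : 0 < u -> Rpower (rad u v) p = exp (p/2 * ln (u^2+v^2)).
Proof. intros Hu. unfold Rpower, rad. rewrite ln_sqrt'. f_equal. field. nra. Qed.

Lemma upos C u v : 0 < C -> 1 <= rad u v -> Rabs v <= C * u -> 0 < u.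
Proof.
  intros HC Hr Hv. destruct (Rlt_or_le 0 u) as [H|H]; auto.
  assert (Hv0 : Rabs v = 0). { assert (0 <= Rabs v) by apply Rabs_pos. nra. }
  assert (v = 0). { destruct (Rcase_abs v); rewrite ?Rabs_left, ?Rabs_right in Hv0 by lra; lra. }
  assert (u = 0). { assert (0 <= Rabs v) by apply Rabs_pos. nra. }
  subst. unfold rad in Hr. replace (0^2+0^2) with 0 in Hr by ring. rewrite sqrt_0 in Hr. lra.
Qed.

Lemma div_le1 a S : 0 <= a <= S -> 0 < S -> 0 <= a / S <= 1.
Proof.
  intros Ha HS. split. apply Rdiv_le_0_compat; lra.
  apply (Rmult_le_reg_r S); [lra|]. replace (a / S * S) with a by (field; lra). lra.
Qed.

Lemma L_bound gamma h k1 k2 p q b C u v z :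
  0 < p -> 0 < k1 -> 0 < k2 -> 0 < C -> b = alpha_h h * p - (1 - h) * q -> 0 < b ->
  0 < u -> Rabs v <= C * u -> 0 < z -> 1 <= rad u v ->
  2 * sqrt (1 + C^2) * (p * (k1 + k2) * (1 + Rabs (p - 2))) / b <= rad u v ->
  opL gamma h k1 k2 (phi0 p q) u v z
   <= - gamma * p * Rpower (rad u v) p * Rpower z q
      - b / (2 * sqrt (1 + C ^ 2)) * Rpower (rad u v) (p + 1) * Rpower z (q - 2/3).
Proof.
  intros Hp Hk1 Hk2 HC Hb Hbpos Hu Hv Hz Hr1 HrK.
  assert (HS : 0 < u^2+v^2) by nra.
  unfold opL. rewrite du_phi, dv_phi, dz_phi, duu_phi, dvv_phi by auto.
  rewrite Rpower_rad by auto.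
  assert (Hrp1 : Rpower (rad u v) (p+1) = exp (p/2 * ln (u^2+v^2)) * rad u v).
  { rewrite Rpower_plus, Rpower_rad, Rpower_1 by (auto; apply rad_pos; auto). reflexivity. }
  rewrite Hrp1.
  assert (Hzq : Rpower z (q - 2/3) = Rpower z q / Rpower z (2/3)).
  { replace q with ((q - 2/3) + 2/3) at 2 by ring. rewrite Rpower_plus. field.
    unfold Rpower; apply Rgt_not_eq, exp_pos. }
  rewrite Hzq.
  assert (Hew : Rpower z (1/3) * Rpower z (2/3) = z).
  { rewrite <- Rpower_plus. replace (1/3+2/3) with 1 by field. apply Rpower_1; auto. }
  assert (He : 0 < Rpower z (1/3)) by (unfold Rpower; apply exp_pos).
  assert (Hw : 0 < Rpower z (2/3)) by (unfold Rpower; apply exp_pos).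
  assert (HZ : 0 < Rpower z q) by (unfold Rpower; apply exp_pos).
  assert (HX : 0 < exp (p/2 * ln (u^2+v^2))) by apply exp_pos.
  assert (Hrr : rad u v * rad u v = u^2+v^2) by (unfold rad; apply sqrt_sqrt; nra).
  assert (Hc : 1 <= sqrt (1 + C^2)).
  { pattern 1 at 1; rewrite <- sqrt_1. apply sqrt_le_1; nra. }
  assert (Huc : rad u v <= u * sqrt (1 + C^2)).
  { assert (Hv2 : v^2 <= C^2*u^2).
    { assert (0 <= Rabs v) by apply Rabs_pos.
      replace (v^2) with (Rabs v ^ 2) by (rewrite RPow_abs, Rabs_pos_eq; [reflexivity | nra]). nra. }
    assert (Hcc : sqrt (1 + C^2) * sqrt (1 + C^2) = 1 + C^2) by (apply sqrt_sqrt; nra).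
    assert (0 <= rad u v) by (unfold rad; apply sqrt_pos).
    assert (Hsq : rad u v * rad u v <= (u * sqrt (1 + C^2)) * (u * sqrt (1 + C^2))).
    { rewrite Hrr. replace ((u * sqrt (1 + C^2)) * (u * sqrt (1 + C^2))) with (u^2 * (sqrt (1 + C^2) * sqrt (1 + C^2))) by ring.
      rewrite Hcc. nra. }
    destruct (Rle_or_lt (rad u v) (u * sqrt (1 + C^2))) as [Hl|Hl]; auto.
    assert (0 <= u * sqrt (1 + C^2)) by nra.
    assert (u * sqrt (1 + C^2) * (u * sqrt (1 + C^2)) < rad u v * rad u v) by (apply Rmult_le_0_lt_compat; lra).
    lra. }
  set (c := sqrt (1 + C^2)) in *.
  set (r := rad u v) in *.
  set (X := exp (p/2 * ln (u^2+v^2))) in *.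
  set (Z := Rpower z q) in *.
  set (e := Rpower z (1/3)) in *.
  set (w := Rpower z (2/3)) in *.
  set (S := u^2+v^2) in *.
  assert (HSdef : S = u^2+v^2) by reflexivity.
  clearbody c r X Z e w S.
  subst z.
  set (K := p * (k1 + k2) * (1 + Rabs (p - 2))) in *.
  set (D := p * (k1 * (1/S + (p-2)*u^2/S^2) + k2 * (1/S + (p-2)*v^2/S^2))).
  assert (Hid : - gamma * u * (p * u * X * Z / S) - gamma * v * (p * v * X * Z / S) -
     (alpha_h h * u ^ 2 - v ^ 2) / w * (p * u * X * Z / S) -
     (alpha_h h + 1) * (u * v) / w * (p * v * X * Z / S) +
     (1 - h) * u * e * (X * (q / (e * w) * Z)) +
     k1 / w * (p * Z * X * (1 / S + (p - 2) * u ^ 2 / S ^ 2)) +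
     k2 / w * (p * Z * X * (1 / S + (p - 2) * v ^ 2 / S ^ 2))
     = - gamma * p * X * Z + Z * X / w * (- b * u + D)).
  { unfold D. rewrite Hb. unfold alpha_h. rewrite HSdef. field; repeat split; try lra; nra. }
  rewrite Hid.
  assert (HD : D <= K / S).
  { assert (H1 : forall y, 0 <= y <= 1 -> (p-2)*y <= Rabs (p-2)).
    { intros y Hy. destruct (Rcase_abs (p-2)); [rewrite Rabs_left by lra | rewrite Rabs_right by lra]; nra. }
    assert (Hy1 : 0 <= u^2/S <= 1). { apply div_le1; nra. }
    assert (Hy2 : 0 <= v^2/S <= 1). { apply div_le1; nra. }
    specialize (H1 _ Hy1) as A1. specialize (H1 _ Hy2) as A2.
    replace D with ((p*k1*(1 + (p-2)*(u^2/S)) + p*k2*(1+(p-2)*(v^2/S))) / S) by (unfold D; field; lra).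
    unfold K. unfold Rdiv. apply Rmult_le_compat_r. left; apply Rinv_0_lt_compat; lra.
    assert (0 < p * k1) by nra. assert (0 < p * k2) by nra.
    generalize (Rmult_le_compat_l (p*k1) _ _ (Rlt_le _ _ H) A1).
    generalize (Rmult_le_compat_l (p*k2) _ _ (Rlt_le _ _ H0) A2).
    intros; nra. }
  assert (HK : K <= b * r * S / (2 * c)).
  { assert (0 < r) by lra.
    assert (HK' : 2 * c * K / b <= r) by exact HrK.
    apply Rmult_le_compat_r with (r := b / (2*c)) in HK'.
    2: { apply Rdiv_le_0_compat; lra. }
    replace (2 * c * K / b * (b / (2 * c))) with K in HK' by (field; lra).
    replace (b * r * S / (2 * c)) with (r * S * (b / (2*c))) by (field; lra).
    assert (r <= r * S) by nra.
    assert (0 <= b / (2*c)) by (apply Rdiv_le_0_compat; lra).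
    nra. }
  assert (HKS : K / S <= b * r / (2 * c)).
  { apply (Rmult_le_reg_r S); [lra|]. replace (K / S * S) with K by (field; lra).
    replace (b * r / (2 * c) * S) with (b * r * S / (2 * c)) by (field; lra). lra. }
  assert (Hbu : b * r / c <= b * u).
  { apply (Rmult_le_reg_r c); [lra|]. replace (b * r / c * c) with (b * r) by (field; lra). nra. }
  assert (Hbr : - b * u + D <= - (b * r / (2 * c))).
  { replace (b * r / (2 * c)) with ((b * r / c) / 2) in HKS |- * by (field; lra). lra. }
  assert (HZX : 0 < Z * X / w) by (apply Rdiv_lt_0_compat; nra).
  replace (- gamma * p * X * Z - b / (2 * c) * (X * r) * (Z / w))
    with (- gamma * p * X * Z + Z * X / w * (- (b * r / (2 * c)))) by (field; lra).
  apply Rplus_le_compat_l. apply Rmult_le_compat_l; lra.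
Qed.

Lemma Q_bound p1 p2 q2 u v M :
  0 < p1 -> p1 < p2 -> 0 < q2 / 2 - p2 / 6 ->
  M = 1 + p1 / (3 * (q2/2 - p2/6)) ->
  0 < u -> exp (ln M / (p2 - p1)) <= rad u v ->
  opQ (fsum (phi0 p1 0) (phi0 p2 q2)) u v 1
    <= - (q2 / 2 - p2 / 6) * Rpower (rad u v) p2.
Proof.
  intros Hp1 Hp12 HD HM Hu Hr.
  assert (HS : 0 < u^2+v^2) by nra.
  assert (Hdu : d_u (fsum (phi0 p1 0) (phi0 p2 q2)) u v 1 =
     p1 * u * exp (p1/2 * ln (u^2+v^2)) * Rpower 1 0 / (u^2+v^2)
     + p2 * u * exp (p2/2 * ln (u^2+v^2)) * Rpower 1 q2 / (u^2+v^2)).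
  { unfold d_u, fsum. rewrite !phi0_eq. apply is_derive_unique.
    auto_derive. split; lra. fixln. field. lra. }
  assert (Hdv : d_v (fsum (phi0 p1 0) (phi0 p2 q2)) u v 1 =
     p1 * v * exp (p1/2 * ln (u^2+v^2)) * Rpower 1 0 / (u^2+v^2)
     + p2 * v * exp (p2/2 * ln (u^2+v^2)) * Rpower 1 q2 / (u^2+v^2)).
  { unfold d_v, fsum. rewrite !phi0_eq. apply is_derive_unique.
    auto_derive. split; lra. fixln. field. lra. }
  assert (Hdz : d_z (fsum (phi0 p1 0) (phi0 p2 q2)) u v 1 =
     exp (p1/2 * ln (u^2+v^2)) * (0 / 1 * Rpower 1 0)
     + exp (p2/2 * ln (u^2+v^2)) * (q2 / 1 * Rpower 1 q2)).
  { unfold d_z, fsum. rewrite !phi0_eq. apply is_derive_unique. unfold Rpower.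
    auto_derive. split; lra. fixln. field. }
  unfold opQ. rewrite Hdu, Hdv, Hdz, !Rpower_1_l, Rpower_rad by auto.
  set (D := q2/2 - p2/6) in *.
  assert (HX2 : exp (p2/2 * ln (u^2+v^2)) = exp (p1/2 * ln (u^2+v^2)) * exp ((p2-p1) * ln (rad u v))).
  { rewrite <- exp_plus. f_equal. unfold rad. rewrite ln_sqrt' by lra. field. }
  assert (HM0 : 0 < M) by (rewrite HM; assert (0 < p1 / (3 * D)) by (apply Rdiv_lt_0_compat; lra); lra).
  assert (HE : M <= exp ((p2-p1) * ln (rad u v))).
  { rewrite <- (exp_ln M) at 1 by auto. apply exp_mono.
    apply ln_le in Hr; [| apply exp_pos]. rewrite ln_exp in Hr.
    apply (Rmult_le_compat_l (p2 - p1)) in Hr; [|lra].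
    replace ((p2 - p1) * (ln M / (p2 - p1))) with (ln M) in Hr by (field; lra). lra. }
  rewrite HX2. set (X := exp (p1/2 * ln (u^2+v^2))) in *.
  set (E := exp ((p2-p1) * ln (rad u v))) in *.
  assert (HX : 0 < X) by apply exp_pos.
  replace (u / (3 * 1) * (p1 * u * X * 1 / (u ^ 2 + v ^ 2) + p2 * u * (X * E) * 1 / (u ^ 2 + v ^ 2)) +
   v / (3 * 1) * (p1 * v * X * 1 / (u ^ 2 + v ^ 2) + p2 * v * (X * E) * 1 / (u ^ 2 + v ^ 2)) -
   (X * (0 / 1 * 1) + X * E * (q2 / 1 * 1)))
   with (X * (p1 / 3 + E * (p2/3 - q2))) by (field; lra).
  replace (- D * (X * E)) with (X * (- D * E)) by ring.
  apply Rmult_le_compat_l; [lra|].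
  assert (p1 / 3 <= D * E).
  { assert (D * M <= D * E) by (apply Rmult_le_compat_l; lra).
    rewrite HM in H. replace (D * (1 + p1 / (3 * D))) with (D + p1/3) in H by (field; lra). lra. }
  unfold D in *. lra.
Qed.
Theorem lemma6p1
  (gamma h kappa1 kappa2 p1 p2 q1 q2 a1 a2 b1 b2 : R)
  (Hgamma : 0 < gamma) (Hh0 : 0 < h) (Hh1 : h < 1)
  (Hk1 : 0 < kappa1) (Hk2 : 0 < kappa2)
  (Hp1 : 0 < p1) (Hp2 : 0 < p2) (Hq1 : q1 = 0) (Hq2 : 0 < q2)
  (Hb1 : b1 = alpha_h h * p1 - (1 - h) * q1)
  (Hb2 : b2 = alpha_h h * p2 - (1 - h) * q2)
  (Hb1pos : 0 < b1) (Hb1a : b1 < a1) (Ha1 : a1 < 1)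
  (Hb2pos : 0 < b2) (Hb2a : b2 < a2) (Ha2 : a2 < 1)
  (Hq2big : q2 > 1/3 * p2 + 1/2 * a2)
  (Hp21 : p2 > p1)
  (Hpa : p2 + 3/2 * a2 > p1 + 3/2 * a1)
  (C : R) (HC : 0 < C) :
  exists R0 : R, forall rstar : R, R0 <= rstar ->
    (forall u v z : R,
       rstar <= rad u v -> Rabs v <= C * u -> 0 < z <= 1 ->
       opL gamma h kappa1 kappa2 (phi0 p1 q1) u v z
         <= - gamma * p1 * Rpower (rad u v) p1 * Rpower z q1
            - b1 / (2 * sqrt (1 + C ^ 2))
              * Rpower (rad u v) (p1 + 1) * Rpower z (q1 - 2/3)
       /\
       opL gamma h kappa1 kappa2 (phi0 p2 q2) u v z
         <= - gamma * p2 * Rpower (rad u v) p2 * Rpower z q2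
            - b2 / (2 * sqrt (1 + C ^ 2))
              * Rpower (rad u v) (p2 + 1) * Rpower z (q2 - 2/3))
    /\
    (forall u v : R,
       rstar <= rad u v -> Rabs v <= C * u ->
       opQ (fsum (phi0 p1 q1) (phi0 p2 q2)) u v 1
         <= - (q2 / 2 - p2 / 6) * Rpower (rad u v) p2).
Proof.
  set (c := sqrt (1 + C^2)).
  assert (Hc : 0 < c) by (apply sqrt_lt_R0; nra).
  set (K1 := p1 * (kappa1 + kappa2) * (1 + Rabs (p1 - 2))).
  set (K2 := p2 * (kappa1 + kappa2) * (1 + Rabs (p2 - 2))).
  assert (HK1 : 0 <= K1) by (unfold K1; assert (0 <= Rabs (p1-2)) by apply Rabs_pos; apply Rmult_le_pos; [apply Rmult_le_pos|]; lra).
  assert (HK2 : 0 <= K2) by (unfold K2; assert (0 <= Rabs (p2-2)) by apply Rabs_pos; apply Rmult_le_pos; [apply Rmult_le_pos|]; lra).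
  set (M := 1 + p1 / (3 * (q2/2 - p2/6))).
  assert (HD : 0 < q2 / 2 - p2 / 6) by lra.
  exists (1 + 2 * c * K1 / b1 + 2 * c * K2 / b2 + exp (ln M / (p2 - p1))).
  assert (T1 : 0 <= 2 * c * K1 / b1) by (apply Rdiv_le_0_compat; nra).
  assert (T2 : 0 <= 2 * c * K2 / b2) by (apply Rdiv_le_0_compat; nra).
  assert (T3 : 0 < exp (ln M / (p2 - p1))) by apply exp_pos.
  intros rstar Hrs. split.
  - intros u v z Hr Hv Hz.
    assert (Hu : 0 < u) by (apply (upos C u v); auto; lra).
    split.
    + apply L_bound with (C := C); auto; try lra. unfold c, K1 in *; lra.
    + apply L_bound with (C := C); auto; try lra. unfold c, K2 in *; lra.
  - intros u v Hr Hv.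
    assert (Hu : 0 < u) by (apply (upos C u v); auto; lra).
    subst q1. apply Q_bound with (M := M); auto; lra.
Qed.
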